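(* Let $G$ be a vertex-weighted complex digraph (as defined in the context) and $k\ge 1$ an integer. Then $G$ has exactly $k$ connected components if and only if the algebraic multiplicity of the eigenvalue $0$ of $L(G)$ equals $k$.
   Context: A vertex-weighted complex digraph is $G=(V,E)$ with $V=\{1,\dots,n\}$, $E\subseteq\{(i,j)\in V\times V:i\neq j\}$ such that for $i\neq j$ at most one of $(i,j),(j,i)$ lies in $E$, together with nonzero complex vertex weights $w_1,\dots,w_n\in\mathbb C\setminus\{0\}$; for each $i$ fix a square root $s_i$ with $s_i^2=w_i$. Vertices $i\neq j$ are adjacent iff $(i,j)\in E$ or $(j,i)\in E$. The adjacency matrix $A(G)$ has $A_{ij}=\overline{s_i}\,s_j$ if $i,j$ are adjacent and $A_{ij}=0$ otherwise. The degree of vertex $i$ is $d_i=\sum_{j \text{ adjacent to } i}|w_j|$, $D(G)=\mathrm{diag}(d_1,\dots,d_n)$, the combinatorial Laplacian is $L(G)=D(G)-A(G)$ and the signless Laplacian is $Q(G)=D(G)+A(G)$; both are Hermitian positive semidefinite. Connectivity, connected components and cycles refer to the underlying undirected graph. *)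

(* Defs.v *)
From HB Require Import structures.
From mathcomp Require Import all_boot all_order all_algebra.
Set Implicit Arguments. Unset Strict Implicit. Unset Printing Implicit Defensive.
Import Order.TTheory GRing.Theory Num.Theory.
Local Open Scope ring_scope.

(* Vertices are 'I_n (= {0,...,n-1}, a relabelling of {1,...,n}).
   Arcs: E : rel 'I_n.  A digraph in the paper's sense: no loops, and
   for i <> j at most one of (i,j),(j,i) is an arc. *)
Definition is_digraph (n : nat) (E : rel 'I_n) : Prop :=
  (forall i, ~~ E i i) /\ (forall i j, ~~ (E i j && E j i)).

Definition adjacent (n : nat) (E : rel 'I_n) : rel 'I_n :=
  fun i j => (i != j) && (E i j || E j i).

Definition num_components (n : nat) (E : rel 'I_n) : nat :=
  n_comp (adjacent E) 'I_n.

Section Mats.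
Variable C : numClosedFieldType.

Definition adj_mx (n : nat) (E : rel 'I_n) (s : 'I_n -> C) : 'M[C]_n :=
  \matrix_(i, j) (if adjacent E i j then (s i)^* * s j else 0).

Definition vdegree (n : nat) (E : rel 'I_n) (w : 'I_n -> C) (i : 'I_n) : C :=
  \sum_(j | adjacent E i j) `|w j|.

Definition deg_mx (n : nat) (E : rel 'I_n) (w : 'I_n -> C) : 'M[C]_n :=
  \matrix_(i, j) (if i == j then vdegree E w i else 0).

Definition laplacian (n : nat) (E : rel 'I_n) (w s : 'I_n -> C) : 'M[C]_n :=
  deg_mx E w - adj_mx E s.

Definition alg_mult (n : nat) (M : 'M[C]_n) (a : C) : nat :=
  mup a (char_poly M).
End Mats.

(* Main.v *)
From HB Require Import structures.
From mathcomp Require Import all_boot all_order all_algebra.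
Require Import Defs.
From mathcomp Require Import ring.
From mathcomp Require Import sesquilinear spectral.
Import Order.TTheory GRing.Theory Num.Theory.
Set Implicit Arguments. Unset Strict Implicit.
Local Open Scope ring_scope.
Lemma rank_ker_eq (F : fieldType) (m c : nat) (A : 'M[F]_m) (V : 'M[F]_(c, m)) :
  row_free V -> V *m A = 0 -> (forall x : 'rV_m, x *m A = 0 -> (x <= V)%MS) ->
  \rank (kermx A) = c.
Proof.
move=> fV VA Hx.
have -> : \rank (kermx A) = \rank V.
  apply/eqmx_rank; apply/andP; split.
    by apply/row_subP => i; apply: Hx; apply/sub_kermxP; rewrite row_sub.
  by apply/sub_kermxP.
by apply/eqP.
Qed.

Lemma char_poly_sim (F : fieldType) (n : nat) (P D : 'M[F]_n) :
  P \in unitmx -> char_poly (invmx P *m D *m P) = char_poly D.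
Proof.
move=> Pu; rewrite /char_poly /char_poly_mx.
set Pi := map_mx polyC (invmx P); set Pp := map_mx polyC P.
have PiPp : Pi *m Pp = 1%:M by rewrite -map_mxM mulVmx // map_mx1.
have -> : 'X%:M - map_mx polyC (invmx P *m D *m P) =
   Pi *m ('X%:M - map_mx polyC D) *m Pp.
  rewrite mulmxBr mulmxBl !map_mxM -/Pi -/Pp; congr (_ - _).
  by rewrite mul_mx_scalar -scalemxAl PiPp scalemx1.
by rewrite !det_mulmx mulrAC -det_mulmx PiPp det1 mul1r.
Qed.

Lemma sum_delta_in (F : nzRingType) (n : nat) (P : pred 'I_n) (i : 'I_n) (g : 'I_n -> F) :
  \sum_(j | P j) (i == j)%:R * g j = if P i then g i else 0.
Proof.
rewrite big_mkcond (bigD1 i) //= eqxx mul1r big1 ?addr0 //.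
by move=> j /negbTE; rewrite eq_sym => ->; rewrite mul0r if_same.
Qed.

Lemma mup_diag (F : fieldType) (n : nat) (d : 'rV[F]_n) :
  mup 0 (char_poly (diag_mx d)) = #|[pred i | d 0 i == 0]|.
Proof.
rewrite char_poly_trig ?diag_mx_is_trig //.
have -> : \prod_(i < n) ('X - (diag_mx d i i)%:P) =
          \prod_(y <- [seq d 0 i | i <- index_enum 'I_n]) ('X - y%:P).
  by rewrite big_map; apply: eq_bigr => i _; rewrite mxE eqxx mulr1n.
rewrite mu_prod_XsubC count_map cardE /enum_mem size_filter.
by apply: eq_count => i /=; rewrite eq_sym.
Qed.

Lemma rank_ker_diag (F : fieldType) (n : nat) (d : 'rV[F]_n) :
  \rank (kermx (diag_mx d)) = #|[pred i | d 0 i == 0]|.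
Proof.
set Z := [pred i | d 0 i == 0].
pose V := \matrix_(k < #|Z|, i < n) ((i == enum_val k)%:R : F).
apply: (@rank_ker_eq _ _ _ _ V).
- apply/row_freeP; exists V^T; apply/matrixP => k k'; rewrite !mxE.
  under eq_bigr do rewrite !mxE.
  under eq_bigr do rewrite [_ == enum_val k]eq_sym.
  rewrite (@sum_delta_in _ _ xpredT (enum_val k) (fun j => (j == enum_val k')%:R)) /=.
  by rewrite (inj_eq enum_val_inj).
- apply/matrixP => k j; rewrite mul_mx_diag !mxE.
  case: eqP => [->|_]; last by rewrite mul0r.
  by have := enum_valP k; rewrite inE => /eqP ->; rewrite mulr0.
- move=> x xD; apply/submxP; exists (\row_k x 0 (enum_val k)).
  apply/rowP => i; rewrite !mxE.
  under eq_bigr do rewrite !mxE mulrC.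
  rewrite -(big_enum_val (A:=Z) (fun j => (i == j)%:R * x 0 j)) sum_delta_in.
  case: ifP => // /negbT iZ.
  have /rowP /(_ i) := xD; rewrite mul_mx_diag !mxE => /eqP.
  by rewrite mulf_eq0 inE in iZ *; rewrite (negbTE iZ) orbF => /eqP.
Qed.

Lemma rank_unit_left (F : fieldType) (n : nat) (U A : 'M[F]_n) :
  U \in unitmx -> \rank (U *m A) = \rank A.
Proof.
move=> Uu; apply/eqP; rewrite eqn_leq mxrankM_maxr /=.
by rewrite -{1}[A](mulKmx Uu) mxrankM_maxr.
Qed.

Lemma mup_normal (C : numClosedFieldType) (n : nat) (A : 'M[C]_n) :
  A \is normalmx -> mup 0 (char_poly A) = \rank (kermx A).
Proof.
move=> /orthomx_spectralP HA.
have Pu := spectral_unit A.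
rewrite HA char_poly_sim // mup_diag -rank_ker_diag !mxrank_ker.
rewrite mxrankMfree ?row_free_unit // rank_unit_left //.
by rewrite unitmx_inv.
Qed.
Lemma adj_sym (n : nat) (E : rel 'I_n) : symmetric (adjacent E).
Proof. by move=> i j; rewrite /adjacent eq_sym orbC. Qed.

Definition S2 (C : numClosedFieldType) (n : nat) (E : rel 'I_n)
  (F : 'I_n -> 'I_n -> C) : C := \sum_i \sum_(j | adjacent E i j) F i j.

Lemma S2_swap (C : numClosedFieldType) (n : nat) (E : rel 'I_n) (F : 'I_n -> 'I_n -> C) :
  S2 E F = S2 E (fun i j => F j i).
Proof.
rewrite /S2.
under eq_bigr do rewrite big_mkcond.
rewrite exchange_big /=; apply: eq_bigr => i _.
rewrite [RHS]big_mkcond; apply: eq_bigr => j _.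
by rewrite adj_sym.
Qed.

Lemma S2_D (C : numClosedFieldType) (n : nat) (E : rel 'I_n) (F G : 'I_n -> 'I_n -> C) :
  S2 E (fun i j => F i j + G i j) = S2 E F + S2 E G.
Proof. by rewrite /S2 -big_split; apply: eq_bigr => i _; rewrite big_split. Qed.

Lemma S2_B (C : numClosedFieldType) (n : nat) (E : rel 'I_n) (F G : 'I_n -> 'I_n -> C) :
  S2 E (fun i j => F i j - G i j) = S2 E F - S2 E G.
Proof. by rewrite /S2 -sumrB; apply: eq_bigr => i _; rewrite sumrB. Qed.

Lemma ker_edge (C : numClosedFieldType) (n : nat) (E : rel 'I_n) (w s : 'I_n -> C)
  (hw : forall i, s i ^+ 2 = w i) (x : 'rV[C]_n) :
  x *m laplacian E w s = 0 ->
  forall i j, adjacent E i j -> s j * x 0 i = s i * x 0 j.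
Proof.
move=> xL.
pose a i j := s j * x 0 i.
have Hw : forall j, `|w j| = s j * (s j)^*.
  by move=> j; rewrite -hw normrX normCK.
pose P1 := S2 E (fun i j => a i j * (a i j)^*).
pose P3 := S2 E (fun i j => a i j * (a j i)^*).
have Q0 : \sum_j (\sum_i x 0 i * laplacian E w s i j) * (x 0 j)^* = 0.
  apply: big1 => j _.
  have := congr1 (fun M : 'rV_n => M 0 j) xL; rewrite !mxE => ->.
  by rewrite mul0r.
have Q1 : \sum_j (\sum_i x 0 i * laplacian E w s i j) * (x 0 j)^* = P1 - P3.
  have Lij : forall i j, laplacian E w s i j = (if i == j then vdegree E w i else 0)
      - (if adjacent E i j then (s i)^* * s j else 0) by move=> i j; rewrite !mxE.
  have inner : forall j, \sum_i x 0 i * laplacian E w s i j =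
      x 0 j * vdegree E w j - \sum_(i | adjacent E i j) x 0 i * ((s i)^* * s j).
    move=> j; under eq_bigr do rewrite Lij mulrBr; rewrite sumrB; congr (_ - _).
      rewrite (bigD1 j) //= eqxx big1 ?addr0 // => i /negbTE ->; by rewrite mulr0.
    by rewrite [RHS]big_mkcond; apply: eq_bigr => i _; case: ifP; rewrite ?mulr0.
  under eq_bigr do rewrite inner mulrBl mulr_suml; rewrite sumrB.
  congr (_ - _).
    rewrite /P1 /S2; apply: eq_bigr => i _.
    rewrite /vdegree mulr_sumr mulr_suml; apply: eq_bigr => j _.
    by rewrite Hw /a rmorphM /=; ring.
  rewrite /P3 S2_swap /S2; apply: eq_bigr => i _.
  apply: eq_big => [j|j _]; first by rewrite adj_sym.
  by rewrite /a rmorphM /=; ring.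
have T0 : S2 E (fun i j => (a i j - a j i) * (a i j - a j i)^*) = 0.
  have -> : S2 E (fun i j => (a i j - a j i) * (a i j - a j i)^*) =
     S2 E (fun i j => (a i j * (a i j)^* + a j i * (a j i)^*) -
                      (a i j * (a j i)^* + a j i * (a i j)^*)).
    by rewrite /S2; apply: eq_bigr => i _; apply: eq_bigr => j _;
       rewrite rmorphB /= mulrBl !mulrBr; ring.
  rewrite S2_B !S2_D -(S2_swap E (fun i j => a i j * (a i j)^*)).
  rewrite -(S2_swap E (fun i j => a i j * (a j i)^*)) -/P1 -/P3.
  have -> : P1 + P1 - (P3 + P3) = (P1 - P3) + (P1 - P3) by ring.
  by rewrite -Q1 Q0 addr0.
move=> i j eij.
have nn : forall i j, 0 <= (a i j - a j i) * (a i j - a j i)^*.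
  by move=> i' j'; rewrite -normCK exprn_ge0.
rewrite /S2 in T0.
have Hi : \sum_(j | adjacent E i j) (a i j - a j i) * (a i j - a j i)^* = 0.
  apply: (psumr_eq0P _ T0 (i:=i)) => // k _.
  by apply: sumr_ge0 => l _; apply: nn.
have := psumr_eq0P (fun k _ => nn i k) Hi eij.
rewrite -normCK => /eqP; rewrite expf_eq0 /= normr_eq0 subr_eq0 => /eqP.
by rewrite /a.
Qed.

Lemma L_normal (C : numClosedFieldType) (n : nat) (E : rel 'I_n) (w s : 'I_n -> C) :
  laplacian E w s \is normalmx.
Proof.
have LH : map_mx Num.conj_op (laplacian E w s)^T = laplacian E w s.
  apply/matrixP => i j; rewrite !mxE eq_sym adj_sym rmorphB /=.
  congr (_ - _).
    case: eqP => [->|_]; last by rewrite rmorph0.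
    rewrite /vdegree rmorph_sum; apply: eq_bigr => k _.
    exact: (geC0_conj (normr_ge0 (w k))).
  by case: ifP => _; rewrite ?rmorph0 // rmorphM /= conjCK mulrC.
by apply/normalmxP; rewrite LH.
Qed.

Lemma rank_ker_L (C : numClosedFieldType) (n : nat) (E : rel 'I_n) (w s : 'I_n -> C)
  (hs : forall i, s i != 0) (hw : forall i, s i ^+ 2 = w i) :
  \rank (kermx (laplacian E w s)) = num_components E.
Proof.
set e := adjacent E.
have csym := sym_connect_sym (adj_sym E).
have adj_root : forall i j, e i j -> fingraph.root e i = fingraph.root e j.
  by move=> i j eij; apply/(fingraph.rootP csym); apply: connect1.
have Hw : forall j, `|w j| = s j * (s j)^*.
  by move=> j; rewrite -hw normrX normCK.
set R := [pred r | roots e r].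
have -> : num_components E = #|R|.
  by rewrite /num_components /n_comp_mem; apply: eq_card => r; rewrite !inE andbT.
have rootR : forall k : 'I_#|R|, fingraph.root e (enum_val k) = enum_val k.
  by move=> k; have := enum_valP k; rewrite inE => /eqP.
pose V := \matrix_(k < #|R|, i < n) (if fingraph.root e i == enum_val k then s i else 0).
apply: (@rank_ker_eq _ _ _ _ V).
- pose B := \matrix_(i < n, k < #|R|) ((i == enum_val k)%:R * (s i)^-1).
  apply/row_freeP; exists B; apply/matrixP => k k'; rewrite !mxE.
  under eq_bigr do rewrite !mxE mulrCA [_ == enum_val k']eq_sym.
  rewrite (@sum_delta_in _ _ xpredT (enum_val k')
     (fun i => (if fingraph.root e i == enum_val k then s i else 0) * (s i)^-1)) /=.
  rewrite rootR (inj_eq enum_val_inj) eq_sym.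
  by case: eqP => _; rewrite ?mul0r // divff.
- apply/matrixP => k j; rewrite !mxE.
  under eq_bigr do rewrite !mxE mulrBr.
  rewrite sumrB (bigD1 j) //= eqxx big1 ?addr0; last first.
    by move=> i /negbTE ->; rewrite mulr0.
  have -> : \sum_i (if fingraph.root e i == enum_val k then s i else 0) *
              (if adjacent E i j then (s i)^* * s j else 0) =
            \sum_(i | adjacent E i j) (if fingraph.root e i == enum_val k then s i else 0) *
              ((s i)^* * s j).
    by rewrite [RHS]big_mkcond; apply: eq_bigr => i _; case: (adjacent E i j); rewrite ?mulr0.
  case: (boolP (fingraph.root e j == enum_val k)) => Hj.
    have -> : \sum_(i | adjacent E i j) (if fingraph.root e i == enum_val k then s i else 0) *
              ((s i)^* * s j) = \sum_(i | adjacent E j i) (s i * (s i)^*) * s j.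
      apply: eq_big => [i|i eij]; first by rewrite adj_sym.
      by rewrite (adj_root _ _ eij) Hj mulrA.
    rewrite -mulr_suml /vdegree mulrC -mulrBl.
    apply/eqP; rewrite mulf_eq0 subr_eq0; apply/orP; left; apply/eqP.
    by apply: eq_bigr => i _; rewrite Hw.
  rewrite mul0r sub0r big1 ?oppr0 // => i eij.
  by rewrite (adj_root _ _ eij) (negbTE Hj) mul0r.
- move=> x xL.
  have edge := ker_edge hw xL.
  pose g j := x 0 j / s j.
  have gc : forall i j, e i j -> g i = g j.
    move=> i j eij; have H := edge i j eij; rewrite /g.
    apply: (mulIf (hs i)); apply: (mulIf (hs j)).
    rewrite divfK // mulrAC divfK //.
    by rewrite mulrC H mulrC.
  have groot : forall i, g (fingraph.root e i) = g i.
    move=> i.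
    have cl : closed e [pred j | g j == g i].
      by move=> a b eab; rewrite !inE (gc a b eab).
    have := closed_connect cl (connect_root e i).
    by rewrite !inE eqxx => /esym /eqP.
  apply/submxP; exists (\row_k g (enum_val k)).
  apply/rowP => i; rewrite !mxE.
  under eq_bigr do rewrite !mxE.
  have -> : \sum_(k < #|R|) g (enum_val k) * (if fingraph.root e i == enum_val k then s i else 0) =
     \sum_(k < #|R|) (fun r => (fingraph.root e i == r)%:R * (g r * s i)) (enum_val k).
    by apply: eq_bigr => k _; case: eqP => _; rewrite ?mul1r ?mulr0 ?mul0r.
  rewrite -(big_enum_val (A:=R) (fun r => (fingraph.root e i == r)%:R * (g r * s i))).
  rewrite sum_delta_in inE roots_root // groot /g divfK //.
Qed.

Theorem corollary2p7 (C : numClosedFieldType) (n : nat) (E : rel 'I_n)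
    (w s : 'I_n -> C) (k : nat) :
  is_digraph E ->
  (forall i, w i != 0) ->
  (forall i, s i ^+ 2 = w i) ->
  (1 <= k)%N ->
  num_components E = k <-> alg_mult (laplacian E w s) 0 = k.
Proof.
move=> _ hw0 hw _.
have hs : forall i, s i != 0.
  by move=> i; apply: contraNneq (hw0 i) => si0; rewrite -hw si0 expr0n.
rewrite /alg_mult mup_normal ?L_normal // rank_ker_L //.
Qed.
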